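(* Let $K$ be a commutative ring of characteristic $0$ with unit and $M$ a multiplicative $\mathbb{R}$-vector subspace of $\mathcal{H}^{>0}$. Let $F$ be an $M$-generalized power series over $K$ with generating monomials $m_0,\dots,m_k$ such that $\operatorname{lm}(F)$ is small, and let $P\in K[[T]]$. (1) $P\circ F$ is an $M$-generalized power series with generating monomials $m_0,\dots,m_k$. (2) Assume in addition that $\operatorname{supp}(F)$ is $M$-natural and the sequence $(\operatorname{lm}(F)^\nu:\nu\in\mathbb{N})$ is coinitial in $M$. Then $P\circ F$ has $M$-natural support.
   Context: $\mathcal{H}$ is the Hardy field of germs at $+\infty$ of unary functions definable in $\mathbb{R}_{\mathrm{an},\exp}$, totally ordered by eventual comparison; a germ is small if it tends to $0$. A generalized power series over $K$ in $X=(X_0,\dots,X_k)$ is $\sum_{\alpha\in[0,\infty)^{k+1}}a_\alpha X^\alpha$ with support in a product of well-ordered subsets of $\mathbb{R}$; these form a ring $K[[X^*]]$; the support is natural if for each $a>0$ and each $i$, $[0,a)\cap\Pi_i(\operatorname{supp}G)$ is finite. An $M$-generalized power series with generating monomials $m_0,\dots,m_k$ (small elements of $M$) is a series $G(m)=\sum_{n\in M}\big(\sum_{\alpha\in\operatorname{supp}G,\,m^\alpha=n}a_\alpha\big)n$ in the ring $K((M))$ of formal series with anti-well-ordered support, for some $G\in K[[X^*]]$ with natural support; $\operatorname{lm}$ denotes the largest support element. Composition: if $P=\sum_\nu a_\nu T^\nu$ and $F=G(m)$ with $G$ of natural support, then since $\operatorname{lm}(F)$ is small, $G$ has positive order, the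 sum $P\circ G:=\sum_\nu a_\nu G^\nu$ is a well-defined element of $K[[X^*]]$, and $P\circ F:=(P\circ G)(m)$; this does not depend on the choice of $G$. A subset $S\subseteq M$ is $M$-natural if $S\cap(a,+\infty)$ is finite for all $a\in M$; coinitial in $M$ means that for every $m\in M$ some term of the sequence is $\le m$. *)

(* Defs.v *)
From HB Require Import structures.
From mathcomp Require Import all_boot all_order all_algebra.
From mathcomp Require Import Rstruct.
From Stdlib Require Import ClassicalEpsilon.
Set Implicit Arguments. Unset Strict Implicit. Unset Printing Implicit Defensive.
Import Order.TTheory GRing.Theory Num.Theory.
Local Open Scope ring_scope.

Notation Real := Rdefinitions.R.

(* M : a totally ordered multiplicative R-vector space (an abstraction of a *)
(* multiplicative R-vector subspace of H^{>0}).     *)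
(* mmul = product of germs, mone = the germ 1, mpowr m r = m^r,             *)
(* mle = eventual comparison.                                               *)
Record ordMulRVS := OrdMulRVS {
  mcar :> Type;
  mmul : mcar -> mcar -> mcar;
  mone : mcar;
  mpowr : mcar -> Real -> mcar;
  mle : mcar -> mcar -> Prop;
  mmulA : forall x y z, mmul x (mmul y z) = mmul (mmul x y) z;
  mmulC : forall x y, mmul x y = mmul y x;
  mmul1 : forall x, mmul mone x = x;
  mpowr1 : forall x, mpowr x 1 = x;
  mpowr0 : forall x, mpowr x 0 = mone;
  mpowrD : forall x (a b : Real), mpowr x (a + b) = mmul (mpowr x a) (mpowr x b);
  mpowrM : forall x y (a : Real), mpowr (mmul x y) a = mmul (mpowr x a) (mpowr y a);
  mpowrA : forall x (a b : Real), mpowr (mpowr x a) b = mpowr x (a * b);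
  mle_refl : forall x, mle x x;
  mle_anti : forall x y, mle x y -> mle y x -> x = y;
  mle_trans : forall x y z, mle x y -> mle y z -> mle x z;
  mle_total : forall x y, mle x y \/ mle y x;
  mle_mul : forall x y z, mle x y -> mle (mmul x z) (mmul y z);
  mle_powr : forall x (a : Real), mle mone x -> 0 <= a -> mle mone (mpowr x a)
}.

Definition mlt (M : ordMulRVS) (x y : M) : Prop := mle x y /\ x <> y.

(* a germ is small iff it tends to 0, i.e. (for positive germs of a Hardy
   field) iff it is < 1 *)
Definition msmall (M : ordMulRVS) (x : M) : Prop := mlt x (mone M).

Definition finiteP (T : Type) (A : T -> Prop) : Prop :=
  exists s : list T, forall x, A x -> List.In x s.

(* sum of f over the set A when A is finite (0 otherwise: never used in a
   situation where A is infinite) *)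
Definition fsum (T : eqType) (V : nmodType) (A : T -> Prop) (f : T -> V) : V :=
  match excluded_middle_informative
          (exists s : seq T, uniq s /\ forall x, x \in s <-> A x) with
  | left H => \sum_(x <- proj1_sig (constructive_indefinite_description _ H)) f x
  | right _ => 0
  end.

Definition exps (k : nat) := {ffun 'I_k.+1 -> Real}.

Definition gser (K : comNzRingType) (k : nat) := exps k -> K.

Definition well_ordered (S : Real -> Prop) : Prop :=
  forall A : Real -> Prop, (forall x, A x -> S x) -> (exists x, A x) ->
    exists x, A x /\ forall y, A y -> x <= y.

Definition is_gps (K : comNzRingType) (k : nat) (G : gser K k) : Prop :=
  (forall a, G a != 0 -> forall i, 0 <= a i) /\
  exists W : 'I_k.+1 -> Real -> Prop,
    (forall i, well_ordered (W i)) /\ forall a, G a != 0 -> forall i, W i (a i).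

Definition natural_support (K : comNzRingType) (k : nat) (G : gser K k) : Prop :=
  forall (r : Real) (i : 'I_k.+1), 0 < r ->
    finiteP (fun x : Real => 0 <= x < r /\ exists a, G a != 0 /\ a i = x).

Definition gone (K : comNzRingType) (k : nat) : gser K k :=
  fun a => if a == [ffun=> 0] then 1 else 0.

Definition gmul (K : comNzRingType) (k : nat) (G H : gser K k) : gser K k :=
  fun a => fsum (fun bc : exps k * exps k =>
                   [/\ G bc.1 != 0, H bc.2 != 0 & [ffun i => bc.1 i + bc.2 i] = a])
                (fun bc => G bc.1 * H bc.2).

Fixpoint gpow (K : comNzRingType) (k : nat) (G : gser K k) (n : nat) : gser K k :=
  match n with O => @gone K k | n'.+1 => gmul G (gpow G n') end.

(* P o G = sum_nu a_nu G^nu, for P = sum_nu a_nu T^nu in K[[T]] *)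
Definition gcomp (K : comNzRingType) (k : nat) (P : nat -> K) (G : gser K k) : gser K k :=
  fun a => fsum (fun nu : nat => P nu * gpow G nu a != 0) (fun nu => P nu * gpow G nu a).

Definition mono (M : ordMulRVS) (k : nat) (m : 'I_k.+1 -> M) (a : exps k) : M :=
  \big[@mmul M / mone M]_(i < k.+1) mpowr (m i) (a i).

Definition geval (K : comNzRingType) (M : ordMulRVS) (k : nat)
    (m : 'I_k.+1 -> M) (G : gser K k) : M -> K :=
  fun n => fsum (fun a => G a != 0 /\ mono m a = n) G.

Definition in_hahn (K : comNzRingType) (M : ordMulRVS) (F : M -> K) : Prop :=
  forall A : M -> Prop, (forall x, A x -> F x != 0) -> (exists x, A x) ->
    exists x, A x /\ forall y, A y -> mle y x.

Definition is_Mgps (K : comNzRingType) (M : ordMulRVS) (k : nat)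
    (m : 'I_k.+1 -> M) (F : M -> K) : Prop :=
  (forall i, msmall (m i)) /\ in_hahn F /\
  exists G : gser K k, is_gps G /\ natural_support G /\ F = geval m G.

Definition is_lm (K : comNzRingType) (M : ordMulRVS) (F : M -> K) (l : M) : Prop :=
  F l != 0 /\ forall n, F n != 0 -> mle n l.

Definition lm_small (K : comNzRingType) (M : ordMulRVS) (F : M -> K) : Prop :=
  exists l, is_lm F l /\ msmall l.

Definition Mcomp (K : comNzRingType) (M : ordMulRVS) (k : nat)
    (m : 'I_k.+1 -> M) (P : nat -> K) (F : M -> K) : M -> K :=
  match excluded_middle_informative
          (exists G : gser K k, is_gps G /\ natural_support G /\ F = geval m G) with
  | left H => geval m (gcomp P (proj1_sig (constructive_indefinite_description _ H)))
  | right _ => fun _ => 0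
  end.

Definition M_natural (K : comNzRingType) (M : ordMulRVS) (F : M -> K) : Prop :=
  forall a : M, finiteP (fun n => F n != 0 /\ mlt a n).

Definition coinitial (M : ordMulRVS) (u : nat -> M) : Prop :=
  forall x : M, exists nu, mle (u nu) x.

(* Main.v *)
Require Import Defs.
From HB Require Import structures.
From mathcomp Require Import all_boot all_order all_algebra.
From mathcomp Require Import Rstruct.
From Stdlib Require Import ClassicalEpsilon Classical.
Set Implicit Arguments. Unset Strict Implicit. Unset Printing Implicit Defensive.
Import Order.TTheory GRing.Theory Num.Theory.
Local Open Scope ring_scope.

Definition bP (P : Prop) : bool := if excluded_middle_informative P then true else false.
Lemma bPP (P : Prop) : reflect P (bP P).
Proof. by rewrite /bP; case: excluded_middle_informative => h; constructor. Qed.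

Lemma In_mem (T : eqType) (x : T) (s : seq T) : List.In x s <-> x \in s.
Proof.
elim: s => [|y s IH] //=; rewrite in_cons; split.
- by case=> [->|/IH ->]; rewrite ?eqxx ?orbT.
- by case/orP => [/eqP ->|/IH]; [left|right].
Qed.

Lemma finite_exact (T : eqType) (A : T -> Prop) : finiteP A ->
  exists s : seq T, uniq s /\ forall x, x \in s <-> A x.
Proof.
case=> s hs; exists (undup [seq x <- s | bP (A x)]); split; first exact: undup_uniq.
move=> x; rewrite mem_undup mem_filter; split; first by case/andP => /bPP.
by move=> Ax; apply/andP; split; [exact/bPP | apply/In_mem/hs].
Qed.

Lemma fsum_eq (T : eqType) (V : nmodType) (A : T -> Prop) (f g : T -> V) (s : seq T) :
  uniq s -> (forall x, A x -> x \in s) ->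
  (forall x, x \in s -> A x -> g x = f x) ->
  (forall x, x \in s -> ~ A x -> g x = 0) ->
  fsum A f = \sum_(x <- s) g x.
Proof.
move=> us As gf g0.
have ex : exists s0 : seq T, uniq s0 /\ forall x, x \in s0 <-> A x.
  by apply: finite_exact; exists s => x /As /In_mem.
rewrite /fsum; case: excluded_middle_informative => [H|nH]; last by case: (nH ex).
case: (constructive_indefinite_description _ H) => s0 [u0 h0] /=.
rewrite [RHS](bigID (fun x => bP (A x))) /= [X in _ = _ + X]big1_seq ?addr0; last first.
  by move=> x /andP [/bPP nA xs]; apply: g0.
rewrite [RHS]big_seq_cond [RHS](@eq_bigr _ _ _ _ _ _ _ f); last first.
  by move=> x /andP [xs /bPP Ax]; apply: gf.
rewrite -[in RHS]big_filter.
have hp : perm_eq s0 [seq i <- s | (i \in s) && bP (A i)].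
  apply: uniq_perm => //; first exact: filter_uniq.
  move=> x; rewrite mem_filter; apply/idP/idP => [/h0 Ax|/andP [/andP [_ /bPP /h0 ->] _]//].
  have xs := As _ Ax.
  by rewrite xs andbT; apply/bPP.
by rewrite (perm_big _ hp).
Qed.

Lemma sum_nz (T : Type) (V : nmodType) (s : seq T) (f : T -> V) :
  \sum_(x <- s) f x != 0 -> exists x, List.In x s /\ f x != 0.
Proof.
elim: s => [|y s IH]; first by rewrite big_nil eqxx.
rewrite big_cons; case: (eqVneq (f y) 0) => [->|hy] h.
  by rewrite add0r in h; case: (IH h) => x [xs fx]; exists x; split => //; right.
by exists y; split => //; left.
Qed.

Lemma fsum_nz (T : eqType) (V : nmodType) (A : T -> Prop) (f : T -> V) :
  fsum A f != 0 -> exists x, A x /\ f x != 0.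
Proof.
rewrite /fsum; case: excluded_middle_informative => [H|]; last by rewrite eqxx.
case: (constructive_indefinite_description _ H) => s0 [u0 h0] /= /sum_nz [x [xs fx]].
by exists x; split => //; apply/h0/In_mem.
Qed.

Lemma group_sum (T : eqType) (U : Type) (R : comNzRingType) (s : seq T)
   (g : T -> U) (f : T -> R) (h : U -> R) :
  (forall x, x \in s -> h (g x) != 0 ->
     \sum_(y <- s | bP (g y = g x)) f y = 0) ->
  \sum_(x <- s) f x * h (g x) = 0.
Proof.
move: {2}(size s) (leqnn (size s)) => n; elim: n s => [|n IH] s.
  by rewrite leqn0 => /nilP ->; rewrite big_nil.
case: s => [|x0 s] hs hyp; first by rewrite big_nil.
rewrite (bigID (fun y => bP (g y = g x0))) /=.
have -> : \sum_(i <- x0 :: s | true && bP (g i = g x0)) f i * h (g i)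
          = (\sum_(i <- x0 :: s | bP (g i = g x0)) f i) * h (g x0).
  rewrite mulr_suml; apply: eq_bigr => i /bPP ->; done.
have -> : \sum_(i <- x0 :: s | true && ~~ bP (g i = g x0)) f i * h (g i)
   = \sum_(i <- [seq y <- s | ~~ bP (g y = g x0)]) f i * h (g i).
  rewrite big_filter big_cons /=.
  by have /bPP -> : g x0 = g x0 by [].
rewrite IH.
- case: (eqVneq (h (g x0)) 0) => [->|hx]; first by rewrite mulr0 addr0.
  by rewrite hyp ?mem_head // mul0r addr0.
- by rewrite size_filter (leq_trans (count_size _ _)) // -ltnS.
move=> x; rewrite mem_filter => /andP [/bPP nx xs] hx.
rewrite big_filter_cond.
rewrite (@eq_bigl _ _ _ _ _ _ (fun y => bP (g y = g x))); last first.
  move=> y; apply/idP/idP => [/andP [_ ->]//|/bPP e]; apply/andP; split; last exact/bPP.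
  by apply/negP => /bPP e'; apply: nx; rewrite -e e'.
have := hyp x; rewrite inE xs orbT => /(_ isT hx).
rewrite big_cons; case: bPP => [e|_]; last by [].
by exfalso; apply: nx.
Qed.

HB.instance Definition mmul_comlaw (M : ordMulRVS) :=
  Monoid.isComLaw.Build (mcar M) (mone M) (@mmul M) (@mmulA M) (@mmulC M) (@mmul1 M).

Section MAlg.
Variable M : ordMulRVS.
Implicit Types x y z : M.

Definition minv x := mpowr x (-1).

Lemma mmul1r x : mmul x (mone M) = x.
Proof. by rewrite mmulC mmul1. Qed.

Lemma mulV x : mmul x (minv x) = mone M.
Proof. by rewrite /minv -{1}(mpowr1 x) -mpowrD addrN mpowr0. Qed.

Lemma mcancel z x y : mmul z x = mmul z y -> x = y.
Proof.
move=> e; have := congr1 (mmul (minv z)) e.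
by rewrite !mmulA (mmulC (minv z) z) mulV !mmul1.
Qed.

Lemma mle_mull z x y : mle x y -> mle (mmul z x) (mmul z y).
Proof. by move=> h; rewrite ![mmul z _]mmulC; apply: mle_mul. Qed.

Lemma mle_mul2 (a b c d : M) : mle a b -> mle c d -> mle (mmul a c) (mmul b d).
Proof. by move=> h1 h2; apply: mle_trans (mle_mul c h1) (mle_mull b h2). Qed.

Lemma mle_inv1 x : mle x (mone M) -> mle (mone M) (minv x).
Proof. by move=> h; have := mle_mul (minv x) h; rewrite mulV mmul1. Qed.

Lemma mpowr_one (r : Real) : mpowr (mone M) r = mone M.
Proof. by rewrite -(mpowr0 (mone M)) mpowrA mul0r. Qed.

Lemma mpowr_le1 x (d : Real) : mle x (mone M) -> 0 <= d -> mle (mpowr x d) (mone M).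
Proof.
move=> h hd; have h1 := mle_powr (mle_inv1 h) hd.
have := mle_mull (mpowr x d) h1.
by rewrite mmul1r -mpowrM mulV mpowr_one.
Qed.

Lemma mpowr_ne1 x (d : Real) : x <> mone M -> d != 0 -> mpowr x d <> mone M.
Proof.
move=> hx hd e; apply: hx.
by rewrite -(mpowr1 x) -(divff hd) -mpowrA e mpowr_one.
Qed.

Lemma mle_prod1 (I : Type) (r : seq I) (P : pred I) (F : I -> M) :
  (forall i, P i -> mle (F i) (mone M)) ->
  mle (\big[@mmul M/mone M]_(i <- r | P i) F i) (mone M).
Proof.
move=> h; apply: (big_ind (fun u => mle u (mone M))) => //; first exact: mle_refl.
by move=> u v hu hv; rewrite -(mmul1 (mone M)); apply: mle_mul2.
Qed.

Lemma mle_prod (I : Type) (r : seq I) (P : pred I) (F1 F2 : I -> M) :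
  (forall i, P i -> mle (F1 i) (F2 i)) ->
  mle (\big[@mmul M/mone M]_(i <- r | P i) F1 i) (\big[@mmul M/mone M]_(i <- r | P i) F2 i).
Proof.
move=> h; apply: (big_ind2 (fun u v => mle u v)) => //; first exact: mle_refl.
by move=> *; apply: mle_mul2.
Qed.

Lemma mlt_le_trans x y z : mlt x y -> mle y z -> mlt x z.
Proof.
case=> h1 h2 h3; split; first exact: mle_trans h1 h3.
by move=> e; subst z; apply: h2; apply: mle_anti.
Qed.

Lemma mnle_lt x y : ~ mle y x -> mle x y.
Proof. by case: (mle_total x y). Qed.

End MAlg.

Section Mono.
Variables (M : ordMulRVS) (k : nat) (m : 'I_k.+1 -> M).
Hypothesis msm : forall i, msmall (m i).
Implicit Types a b : exps k.

Lemma mi_le1 i : mle (m i) (mone M).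
Proof. by case: (msm i). Qed.

Definition fadd (a b : exps k) : exps k := [ffun i => a i + b i].

Lemma mono_add a b : mono m (fadd a b) = mmul (mono m a) (mono m b).
Proof.
rewrite /mono -big_split /=; apply: eq_bigr => i _.
by rewrite ffunE mpowrD.
Qed.

Lemma mono0 : mono m [ffun=> 0] = mone M.
Proof. by rewrite /mono big1 // => i _; rewrite ffunE mpowr0. Qed.

Lemma mono_le1 a : (forall i, 0 <= a i) -> mle (mono m a) (mone M).
Proof. by move=> h; apply: mle_prod1 => i _; apply: mpowr_le1 => //; apply: mi_le1. Qed.

Lemma mono_ne1 a : (forall i, 0 <= a i) -> a <> [ffun=> 0] -> mono m a <> mone M.
Proof.
move=> h0 hne.
have [j hj] : exists j, a j != 0.
  apply: NNPP => hn; apply: hne; apply/ffunP => i; rewrite ffunE.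
  by apply: NNPP => hi; apply: hn; exists i; apply/eqP.
rewrite /mono (bigD1 j) //= => e.
have h1 : mle (mpowr (m j) (a j)) (mone M) by apply: mpowr_le1 => //; apply: mi_le1.
have h2 : mle (mone M) (mpowr (m j) (a j)).
  rewrite -e -{2}(mmul1r (mpowr (m j) (a j))); apply: mle_mull.
  by apply: mle_prod1 => i _; apply: mpowr_le1 => //; apply: mi_le1.
apply: (mpowr_ne1 (x := m j) (d := a j)) => //; last by apply: mle_anti.
by case: (msm j).
Qed.

Lemma fadd_sub a b : fadd a [ffun i => b i - a i] = b.
Proof. by apply/ffunP => i; rewrite !ffunE addrC subrK. Qed.

Lemma mono_anti a b : (forall i, a i <= b i) -> mle (mono m b) (mono m a).
Proof.
move=> h; rewrite -(fadd_sub a b) mono_add -{2}(mmul1r (mono m a)); apply: mle_mull.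
by apply: mono_le1 => i; rewrite ffunE subr_ge0.
Qed.

Lemma mono_strict a b : (forall i, a i <= b i) -> a <> b -> mono m b <> mono m a.
Proof.
move=> h hne; rewrite -(fadd_sub a b) mono_add => e.
have : mono m [ffun i => b i - a i] = mone M.
  by apply: (@mcancel _ (mono m a)); rewrite e mmul1r.
apply: mono_ne1; first by move=> i; rewrite ffunE subr_ge0.
move=> e2; apply: hne; apply/ffunP => i; move/ffunP: e2 => /(_ i).
by rewrite !ffunE => /eqP; rewrite subr_eq0 => /eqP.
Qed.

End Mono.

Definition cid {A : Type} {P : A -> Prop} (h : exists x, P x) : {x | P x} := constructive_indefinite_description P h.

Lemma list_min0 (s : seq Real) : s != [::] ->
  exists y, y \in s /\ forall z, z \in s -> y <= z.
Proof.
elim: s => [|a s IH] // _.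
case: (eqVneq s [::]) => [->|ns].
  by exists a; split; [exact: mem_head | move=> z; rewrite inE => /eqP ->].
case: (IH ns) => y [ys hy].
case: (leP a y) => hay.
  exists a; split; first exact: mem_head.
  move=> z; rewrite in_cons => /orP [/eqP ->//|/hy]; exact: le_trans.
exists y; split; first by rewrite in_cons ys orbT.
move=> z; rewrite in_cons => /orP [/eqP ->|/hy //]; exact: ltW.
Qed.

Lemma list_min (s : seq Real) (x0 : Real) : x0 \in s ->
  exists y, y \in s /\ forall z, z \in s -> y <= z.
Proof. by move=> h; apply: list_min0; apply/eqP => e; rewrite e in h. Qed.

Lemma natural_wo (W : Real -> Prop) :
  (forall r, finiteP (fun x => W x /\ x < r)) -> well_ordered W.
Proof.
move=> hf A AW [x0 Ax0].
case: (hf (x0 + 1)) => L hL.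
have x0L : x0 \in [seq y <- L | bP (A y)].
  rewrite mem_filter; apply/andP; split; first exact/bPP.
  by apply/In_mem/hL; split; [apply: AW | rewrite ltrDl ltr01].
case: (list_min x0L) => y [yL hy]; move: yL; rewrite mem_filter => /andP [/bPP Ay _].
exists y; split => // z Az.
case: (ltP z (x0 + 1)) => hz.
  apply: hy; rewrite mem_filter; apply/andP; split; first exact/bPP.
  by apply/In_mem/hL; split => //; apply: AW.
apply: le_trans (hy _ x0L) _; apply: le_trans hz; by rewrite lerDl ler01.
Qed.

Lemma subseq_mono (W : Real -> Prop) (x : nat -> Real) :
  well_ordered W -> (forall j, W (x j)) ->
  exists psi : nat -> nat, (forall j, psi j < psi j.+1)%N /\ forall j, x (psi j) <= x (psi j.+1).
Proof.
move=> hw hW.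
have tail : forall N, exists j, (N <= j)%N /\ forall l, (N <= l)%N -> x j <= x l.
  move=> N; case: (hw (fun y => exists l, (N <= l)%N /\ x l = y)).
  - by move=> y [l [_ <-]].
  - by exists (x N), N.
  move=> y [[j [hj <-]] hy]; exists j; split => // l hl; apply: hy; by exists l.
pose tm N := proj1_sig (cid (tail N)).
have tm1 N : (N <= tm N)%N by rewrite /tm; destruct (cid (tail N)) as [j [hj h]].
have tm2 N l : (N <= l)%N -> x (tm N) <= x l by move=> hl; rewrite /tm; destruct (cid (tail N)) as [j [hj h]]; apply: h.
pose fix psi j := match j with 0 => tm 0%N | j'.+1 => tm (psi j').+1 end.
exists psi; split => j; first by rewrite /= tm1.
case: j => [|j] /=; first exact: tm2.
apply: tm2; apply: leq_trans (tm1 _); apply: leqW; done.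
Qed.

Lemma inf_seq (T : Type) (A : T -> Prop) : ~ finiteP A ->
  exists s : nat -> T, (forall j, A (s j)) /\ forall j l, (j < l)%N -> s j <> s l.
Proof.
move=> nf.
have pk : forall L : list T, exists x, A x /\ ~ List.In x L.
  move=> L; apply: NNPP => h; apply: nf; exists L => x Ax.
  by apply: NNPP => hx; apply: h; exists x.
pose p L := proj1_sig (cid (pk L)).
have p1 L : A (p L) by rewrite /p; case: cid => y [].
have p2 L : ~ List.In (p L) L by rewrite /p; case: cid => y [].
pose fix lst j := match j with 0 => nil | j'.+1 => p (lst j') :: lst j' end.
exists (fun j => p (lst j)); split => // j l hjl e.
have : List.In (p (lst j)) (lst l).
  elim: l hjl {e} => [//|l IH]; rewrite ltnS leq_eqVlt => /orP [/eqP ->|/IH h].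
    by left.
  by right.
by rewrite e; apply: p2.
Qed.

Fixpoint sums (L : seq Real) (n : nat) : seq Real :=
  if n is n'.+1 then sums L n' ++ [seq y + z | y <- L, z <- sums L n'] else [:: 0].

Lemma sums_mono L n n' : (n <= n')%N -> {subset sums L n <= sums L n'}.
Proof.
move=> /subnK <-; elim: (n' - n)%N => [|d IH] x // /IH.
by rewrite addSn /= mem_cat => ->.
Qed.

Lemma sums_in L (l : seq Real) n : (forall y, y \in l -> y \in L) -> (size l <= n)%N ->
  \sum_(y <- l) y \in sums L n.
Proof.
elim: l n => [|y l IH] n hl hs.
  by rewrite big_nil; apply: (@sums_mono L 0) => //; rewrite inE.
case: n hs => [//|n] hs; rewrite big_cons /= mem_cat; apply/orP; right.
apply: allpairs_f; first by apply: hl; rewrite mem_head.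
by apply: IH => // z hz; apply: hl; rewrite in_cons hz orbT.
Qed.

Lemma le_sum_nneg (l : seq Real) y : (forall z, z \in l -> 0 <= z) -> y \in l ->
  y <= \sum_(z <- l) z.
Proof.
elim: l => [//|a l IH] h; rewrite big_cons in_cons => /orP [/eqP ->|yl].
  rewrite lerDl big_seq sumr_ge0 // => z zl; apply: h; by rewrite in_cons zl orbT.
apply: le_trans (IH _ yl) _; first by move=> z zl; apply: h; rewrite in_cons zl orbT.
by rewrite lerDr h ?mem_head.
Qed.

Lemma foldmin_pos (s : seq Real) : (forall x, x \in s -> 0 < x) -> 0 < foldr Num.min 1 s.
Proof.
elim: s => [|a s IH] h /=; first exact: ltr01.
rewrite lt_min h ?mem_head // IH // => x xs; apply: h; by rewrite in_cons xs orbT.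
Qed.

Lemma foldmin_le (s : seq Real) x : x \in s -> foldr Num.min 1 s <= x.
Proof.
elim: s => [//|a s IH]; rewrite in_cons /= => /orP [/eqP ->|xs]; first by rewrite ge_min lexx.
by rewrite ge_min IH ?orbT.
Qed.

Lemma foldmin_le1 (s : seq Real) : foldr Num.min 1 s <= 1.
Proof. elim: s => [|a s IH] /=; first exact: lexx. by rewrite ge_min IH orbT. Qed.

Lemma size_le_sum (l : seq Real) d : (forall y, y \in l -> d <= y) ->
  (size l)%:R * d <= \sum_(y <- l) y.
Proof.
elim: l => [|a l IH] h; first by rewrite big_nil mul0r.
rewrite big_cons /= -nat1r mulrDl mul1r lerD //; first by apply: h; rewrite mem_head.
by apply: IH => y yl; apply: h; rewrite in_cons yl orbT.
Qed.

Section Gsec.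
Variables (K : comNzRingType) (k : nat) (G : gser K k).
Hypothesis Gnn : forall a, G a != 0 -> forall i, 0 <= a i.
Hypothesis Gnat : natural_support G.

Definition S i (x : Real) := exists a, G a != 0 /\ a i = x.
Definition Mon i (x : Real) :=
  exists l : seq Real, (forall y, y \in l -> S i y) /\ x = \sum_(y <- l) y.
Definition Nat (a : exps k) := forall i, Mon i (a i).

Lemma S_ge0 i x : S i x -> 0 <= x.
Proof. by case=> a [ha <-]; apply: Gnn. Qed.

Lemma Mon_ge0 i x : Mon i x -> 0 <= x.
Proof. by case=> l [hl ->]; rewrite big_seq sumr_ge0 // => y /hl /S_ge0. Qed.

Lemma Mon0 i : Mon i 0.
Proof. by exists [::]; rewrite big_nil. Qed.

Lemma MonD i x y : Mon i x -> Mon i y -> Mon i (x + y).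
Proof.
case=> l1 [h1 ->] [l2 [h2 ->]]; exists (l1 ++ l2); rewrite big_cat; split => //.
by move=> z; rewrite mem_cat => /orP [/h1|/h2].
Qed.

Lemma MonS i x : S i x -> Mon i x.
Proof. by move=> h; exists [:: x]; rewrite big_seq1; split => // y; rewrite inE => /eqP ->. Qed.

Lemma Nat0 : Nat [ffun=> 0].
Proof. by move=> i; rewrite ffunE; apply: Mon0. Qed.

Lemma NatD a b : Nat a -> Nat b -> Nat (fadd a b).
Proof. by move=> ha hb i; rewrite ffunE; apply: MonD. Qed.

Lemma NatG a : G a != 0 -> Nat a.
Proof. by move=> h i; apply: MonS; exists a. Qed.

Lemma Nat_ge0 a : Nat a -> forall i, 0 <= a i.
Proof. by move=> h i; apply: (Mon_ge0 (h i)). Qed.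

Lemma delta_ex : exists d : Real, 0 < d /\ forall i x, S i x -> 0 < x -> d <= x.
Proof.
have hL : forall i : 'I_k.+1, exists L : seq Real,
    forall x, 0 <= x < 1 /\ S i x -> List.In x L.
  by move=> i; exact: (Gnat i ltr01).
pose L i := proj1_sig (cid (hL i)).
exists (foldr Num.min 1 [seq x <- flatten [seq L i | i <- enum 'I_k.+1] | 0 < x]).
split; first by apply: foldmin_pos => x; rewrite mem_filter => /andP [].
move=> i x Sx x0; case: (ltP x 1) => hx.
  apply: foldmin_le; rewrite mem_filter x0 /=; apply/flatten_mapP; exists i.
    by rewrite mem_enum.
  apply/In_mem; rewrite /L; destruct (cid (hL i)) as [l hl]; apply: hl; split => //.
  by rewrite (ltW x0) hx.
exact: le_trans (foldmin_le1 _) hx.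
Qed.

Lemma Mon_fin i r : finiteP (fun x => Mon i x /\ x < r).
Proof.
case: (lerP r 0) => hr.
  exists nil => x [hm hx]; exfalso; have := Mon_ge0 hm.
  by rewrite leNgt (lt_le_trans hx hr).
case: delta_ex => d [d0 hd].
case: (Gnat i hr) => L hL.
exists (sums L (Num.Def.archi_bound (r / d))).
move=> x [[l [hl ->]] hx]; apply/In_mem.
set l' := [seq y <- l | 0 < y].
have e : \sum_(y <- l) y = \sum_(y <- l') y.
  rewrite big_filter [LHS](bigID (fun y => 0 < y)) /= [X in _ + X]big1_seq ?addr0 //.
  move=> y /andP [hy yl]; have := S_ge0 (hl y yl).
  by rewrite le_eqVlt (negbTE hy) orbF => /eqP <-.
have l'ge0 : forall y, y \in l' -> 0 <= y.
  by move=> y; rewrite mem_filter => /andP [/ltW].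
rewrite e in hx *; apply: sums_in.
  move=> y yl'; have := yl'; rewrite mem_filter => /andP [y0 yl].
  apply/In_mem/hL; split; last exact: hl.
  by rewrite (ltW y0) /= (le_lt_trans (le_sum_nneg l'ge0 yl') hx).
have hs : (size l')%:R * d <= \sum_(y <- l') y.
  apply: size_le_sum => y; rewrite mem_filter => /andP [y0 yl].
  by apply: (hd i) => //; apply: hl.
have hb := @Num.Theory.archi_boundP _ (r / d) (ltW (divr_gt0 hr d0)).
have : ((size l')%:R : Real) < (Num.Def.archi_bound (r / d))%:R.
  apply: le_lt_trans hb; rewrite ler_pdivlMr //; exact: ltW (le_lt_trans hs hx).
by rewrite ltr_nat => /ltnW.
Qed.

Lemma Mon_wo i : well_ordered (Mon i).
Proof. by apply: natural_wo => r; apply: Mon_fin. Qed.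

Lemma gpow_supp nu a : gpow G nu a != 0 -> Nat a.
Proof.
elim: nu a => [|nu IH] a /=.
  rewrite /gone; case: (eqVneq a [ffun=> 0]) => [-> _|_]; first exact: Nat0.
  by rewrite eqxx.
case/fsum_nz => bc [[h1 h2 <-] _].
by apply: (NatD (NatG h1) (IH _ h2)).
Qed.

Lemma gcomp_supp (P : nat -> K) a : gcomp P G a != 0 -> Nat a.
Proof.
case/fsum_nz => nu [h _]; apply: (@gpow_supp nu).
by apply: contraNneq h => ->; rewrite mulr0.
Qed.

End Gsec.

Lemma prod_fin (k : nat) (L : 'I_k.+1 -> seq Real) :
  exists s : seq (exps k), forall x : exps k, (forall i, x i \in L i) -> x \in s.
Proof.
set N := (\sum_(i < k.+1) size (L i))%N.
exists [seq [ffun i => nth 0 (L i) (f i)] | f : {ffun 'I_k.+1 -> 'I_N.+1} <- enum {ffun 'I_k.+1 -> 'I_N.+1}].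
move=> x hx; apply/mapP; exists [ffun i => inord (index (x i) (L i))]; first by rewrite mem_enum.
apply/ffunP => i; rewrite !ffunE inordK ?nth_index //.
have := index_mem (x i) (L i); rewrite hx => /ltnW h.
apply: (@leq_trans (size (L i)).+1); first by []. rewrite ltnS /N (bigD1 i) //=; exact: leq_addr.
Qed.

Section Dick.
Variables (K : comNzRingType) (k : nat) (G : gser K k).
Hypothesis Gnn : forall a, G a != 0 -> forall i, 0 <= a i.
Hypothesis Gnat : natural_support G.

Lemma dickson_list (cs : seq 'I_k.+1) (s : nat -> exps k) : (forall j, Nat G (s j)) ->
  exists phi : nat -> nat, (forall j, phi j < phi j.+1)%N /\
    forall i, i \in cs -> forall j, s (phi j) i <= s (phi j.+1) i.
Proof.
move=> hs; elim: cs => [|i cs [phi [h1 h2]]].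
  by exists id.
have [psi [p1 p2]] := subseq_mono (x := fun j => s (phi j) i) (Mon_wo Gnn Gnat (i:=i))
   (fun j => hs (phi j) i).
exists (fun j => phi (psi j)); split.
  move=> j; have hphi := homo_ltn ltn_trans h1; exact: hphi _ _ (p1 j).
move=> i'; rewrite in_cons => /orP [/eqP -> | hi'] j; first exact: p2.
have hm := homo_leq (f := fun j => s (phi j) i') (r := fun a b => a <= b) (@lexx _ _)
   (fun y x z => @le_trans _ _ y x z) (h2 i' hi').
by apply: hm; exact: ltnW (p1 j).
Qed.

Lemma dickson (s : nat -> exps k) : (forall j, Nat G (s j)) ->
  exists j l, (j < l)%N /\ forall i, s j i <= s l i.
Proof.
move=> hs; have [phi [h1 h2]] := dickson_list (enum 'I_k.+1) hs.
by exists (phi 0%N), (phi 1%N); split => // i; apply: h2; rewrite mem_enum.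
Qed.

Lemma below_fin (a : exps k) : exists s : seq (exps k),
  forall x, Nat G x -> (forall i, x i <= a i) -> x \in s.
Proof.
pose L i := proj1_sig (cid (Mon_fin Gnn Gnat i (a i + 1))).
have [s hs] := prod_fin L; exists s => x hx hle; apply: hs => i.
rewrite /L; destruct (cid (Mon_fin Gnn Gnat i (a i + 1))) as [l hl] => /=.
apply/In_mem/hl; split; first exact: hx.
by apply: le_lt_trans (hle i) _; rewrite ltrDl ltr01.
Qed.

Lemma below_list (Phi : seq (exps k)) : exists Om, uniq Om /\
  forall x, x \in Om <-> (Nat G x /\ exists2 a, a \in Phi & forall i, x i <= a i).
Proof.
apply: finite_exact.
elim: Phi => [|a Phi [L hL]].
  by exists nil => x [_ []].
have [s hs] := below_fin a.
exists (s ++ L) => x [hx [b]]; rewrite in_cons => /orP [/eqP ->|bP] hle.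
  by apply/In_mem; rewrite mem_cat hs.
by apply: List.in_or_app; right; apply: hL; split => //; exists b.
Qed.

Section WithM.
Variables (M : ordMulRVS) (m : 'I_k.+1 -> M).
Hypothesis msm : forall i, msmall (m i).

Lemma fiber_fin (n : M) : finiteP (fun a => Nat G a /\ mono m a = n).
Proof.
apply: NNPP => nf; have [s [hs hinj]] := inf_seq nf.
have [j [l [hjl hle]]] := dickson (s := s) (fun j => (hs j).1).
by apply: (mono_strict msm hle (hinj _ _ hjl)); rewrite (hs l).2 (hs j).2.
Qed.

Lemma fiber_list (n : M) : exists Phi : seq (exps k), uniq Phi /\
  forall x, x \in Phi <-> (Nat G x /\ mono m x = n).
Proof. exact: finite_exact (fiber_fin n). Qed.

End WithM.
End Dick.

Lemma sum_if_eq (T : eqType) (V : nmodType) (s : seq T) x (v : V) : uniq s ->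
  \sum_(a <- s) (if x == a then v else 0) = if x \in s then v else 0.
Proof.
elim: s => [|a s IH]; first by rewrite big_nil.
rewrite /= big_cons in_cons => /andP [ns us]; rewrite IH //.
case: (eqVneq x a) => [->|_] /=; last by rewrite add0r.
by rewrite (negbTE ns) addr0.
Qed.

Fixpoint Prod (K : comNzRingType) (M : ordMulRVS) (F : M -> K) (nu : nat) (n : M) : Prop :=
  match nu with
  | 0 => n = mone M
  | nu'.+1 => exists n1 n2, F n1 != 0 /\ Prod F nu' n2 /\ n = mmul n1 n2
  end.

Section Main.
Variables (K : comNzRingType) (k : nat) (G : gser K k).
Hypothesis Gnn : forall a, G a != 0 -> forall i, 0 <= a i.
Hypothesis Gnat : natural_support G.
Variables (M : ordMulRVS) (m : 'I_k.+1 -> M).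
Hypothesis msm : forall i, msmall (m i).

Lemma E_prod nu : forall n, geval m (gpow G nu) n != 0 -> Prod (geval m G) nu n.
Proof.
elim: nu => [|nu IH] n.
  case/fsum_nz => a [[ha ea] _]; move: ha; rewrite /= /gone.
  case: (eqVneq a [ffun=> 0]) => [e _|]; last by rewrite eqxx.
  by rewrite -ea e mono0.
move=> hE; apply: NNPP => nP; move: hE; apply/negP; rewrite negbK; apply/eqP.
have [Phi [uPhi hPhi]] := fiber_list Gnn Gnat msm n.
have [Om [uOm hOm]] := below_list Gnn Gnat Phi.
set H := gpow G nu.
have OmNat x : x \in Om -> Nat G x by move/hOm => [].
have inOm b c : Nat G b -> Nat G c -> mono m (fadd b c) = n -> b \in Om /\ c \in Om.
  move=> hb hc e; have hbc : fadd b c \in Phi by apply/hPhi; split => //; apply: NatD.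
  split; apply/hOm; (split => //; exists (fadd b c) => // i; rewrite ffunE).
    by rewrite lerDl; apply: (Nat_ge0 Gnn hc).
  by rewrite lerDr; apply: (Nat_ge0 Gnn hb).
set AP := [seq (b, c) | b <- Om, c <- Om].
have uAP : uniq AP.
  apply: allpairs_uniq => //; by move=> [? ?] [? ?] _ _ /= [-> ->].
have step1 : geval m (gpow G nu.+1) n = \sum_(a <- Phi) gpow G nu.+1 a.
  rewrite /geval (@fsum_eq _ _ _ _ (gpow G nu.+1) Phi) //.
  - by move=> a [ha ea]; apply/hPhi; split => //; apply: (gpow_supp ha).
  - move=> a /hPhi [_ ea] hA; apply/eqP; apply: NNPP => hn; apply: hA; split => //.
    by apply/negP.
have step2 : forall a, a \in Phi -> gpow G nu.+1 a =
    \sum_(p <- AP) (if fadd p.1 p.2 == a then G p.1 * H p.2 else 0).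
  move=> a /hPhi [na ea] /=.
  rewrite /gmul (@fsum_eq _ _ _ _ (fun p => if fadd p.1 p.2 == a then G p.1 * H p.2 else 0) AP) //.
  - move=> [b c] /= [h1 h2 e].
    have [bO cO] : b \in Om /\ c \in Om.
      by apply: inOm; [exact: NatG h1 | exact: gpow_supp h2 | rewrite /fadd e].
    exact: allpairs_f.
  - by move=> [b c] _ /= [h1 h2 e]; rewrite /fadd e eqxx.
  - move=> [b c] _ /= hA; case: eqP => // e; apply/eqP; apply: NNPP => hn; apply: hA.
    by split => //; apply/eqP => h0; apply: hn; rewrite /H h0 ?mul0r ?mulr0.
rewrite step1 (eq_big_seq _ step2) exchange_big /=.
rewrite (eq_bigr (fun p => if fadd p.1 p.2 \in Phi then G p.1 * H p.2 else 0)); last first.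
  by move=> p _; rewrite sum_if_eq.
rewrite big_allpairs /=.
pose h (n1 : M) := \sum_(c <- Om) (if bP (mmul n1 (mono m c) = n) then H c else 0).
rewrite (eq_big_seq (fun b => G b * h (mono m b))); last first.
  move=> b bO; rewrite /h mulr_sumr; apply: eq_big_seq => c cO.
  have [hc0|hc] := eqVneq (H c) 0; first by rewrite hc0 mulr0 !if_same mulr0.
  have -> : (fadd b c \in Phi) = bP (mmul (mono m b) (mono m c) = n).
    apply/idP/bPP => [/hPhi [_ <-]|e]; first by rewrite mono_add.
    by apply/hPhi; split; [apply: NatD; [apply: OmNat | apply: gpow_supp hc] | rewrite mono_add].
  by case: bP; rewrite ?mulr0.
apply: group_sum => x xO hx.
have [c [cO hc]] := sum_nz hx; move/In_mem: cO => cO.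
move: hc; case: bPP => [ec hc|]; last by rewrite eqxx.
have e1 : h (mono m x) = geval m H (mono m c).
  rewrite /geval (@fsum_eq _ _ _ _ (fun c' => if bP (mmul (mono m x) (mono m c') = n) then H c' else 0) Om) //.
  - move=> c' [h1 h2]; apply: (proj2 (inOm x c' (OmNat _ xO) (gpow_supp h1) _)).
    by rewrite mono_add h2.
  - by move=> c' _ [h1 h2]; rewrite h2; case: bPP.
  - move=> c' _ hA; case: bPP => // e'; apply/eqP; apply: NNPP => hn; apply: hA; split.
      by apply/negP.
    by apply: (@mcancel _ (mono m x)); rewrite e' ec.
have hP : Prod (geval m G) nu (mono m c) by apply: IH; rewrite -e1.
have e2 : \sum_(y <- Om | bP (mono m y = mono m x)) G y = geval m G (mono m x).
  rewrite big_mkcond /geval; symmetry.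
  rewrite (@fsum_eq _ _ _ _ (fun y => if bP (mono m y = mono m x) then G y else 0) Om) //.
  - move=> y [h1 h2]; apply: (proj1 (inOm y c (NatG h1) (gpow_supp hc) _)).
    by rewrite mono_add h2.
  - by move=> y _ [h1 h2]; case: bPP.
  - move=> y _ hA; case: bPP => // e'; apply/eqP; apply: NNPP => hn; apply: hA; split => //.
    by apply/negP.
rewrite e2; apply/eqP; apply: NNPP => hF; apply: nP.
by exists (mono m x), (mono m c); split; [apply/negP | split].
Qed.

End Main.

Section Main2.
Variables (K : comNzRingType) (k : nat) (G : gser K k).
Hypothesis Gnn : forall a, G a != 0 -> forall i, 0 <= a i.
Hypothesis Gnat : natural_support G.
Variables (M : ordMulRVS) (m : 'I_k.+1 -> M).
Hypothesis msm : forall i, msmall (m i).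

Lemma hahn_geval (H : gser K k) : (forall a, H a != 0 -> Nat G a) -> in_hahn (geval m H).
Proof.
move=> hH A hA [y0 Ay0]; apply: NNPP => nmax.
have step : forall x, A x -> exists y, A y /\ ~ mle y x.
  move=> x Ax; apply: NNPP => h; apply: nmax; exists x; split => // y Ay.
  by apply: NNPP => hy; apply: h; exists y.
pose next x := match excluded_middle_informative (exists y, A y /\ ~ mle y x) with
  | left h => proj1_sig (cid h) | right _ => x end.
have hnext x : A x -> A (next x) /\ ~ mle (next x) x.
  move=> Ax; rewrite /next; case: excluded_middle_informative => [h|h].
    by destruct (cid h) as [y hy].
  by case: h; apply: step.
pose ys j := iter j next y0.
have Ay j : A (ys j) by elim: j => [|j IH] //=; apply: (hnext _ IH).1.
have adj j : mle (ys j) (ys j.+1) by apply: mnle_lt; apply: (hnext _ (Ay j)).2.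
have chain := homo_leq (f := ys) (r := fun a b => mle a b) (@mle_refl M)
   (fun y x z h1 h2 => mle_trans h1 h2) adj.
have strict j l : (j < l)%N -> ~ mle (ys l) (ys j).
  move=> hjl h; apply: (hnext _ (Ay j)).2; apply: mle_trans (chain _ _ hjl) h.
have pre j : exists a, H a != 0 /\ mono m a = ys j.
  by have [a [[h1 h2] _]] := fsum_nz (hA _ (Ay j)); exists a.
pose as_ j := proj1_sig (cid (pre j)).
have has j : H (as_ j) != 0 /\ mono m (as_ j) = ys j by rewrite /as_; destruct (cid (pre j)).
have [j [l [hjl hle]]] := dickson Gnn Gnat (s := as_) (fun j => hH _ (has j).1).
apply: (strict _ _ hjl); have := mono_anti msm hle.
by rewrite (has j).2 (has l).2.
Qed.

Hypothesis G0 : G [ffun=> 0] = 0.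

Lemma gpow_bound : exists d : Real, 0 < d /\
  forall nu a, gpow G nu a != 0 -> nu%:R * d <= \sum_i a i.
Proof.
have [d [d0 hd]] := delta_ex Gnat.
exists d; split => // nu; elim: nu => [|nu IH] a ha.
  by rewrite mul0r sumr_ge0 // => i _; apply: (Nat_ge0 Gnn (gpow_supp ha)).
have [[b c] [[h1 h2 e] _]] := fsum_nz ha.
have eb : d <= \sum_i b i.
  have [j hj] : exists j, b j != 0.
    apply: NNPP => hn; move: h1; apply/negP; rewrite negbK.
    have -> : b = [ffun=> 0].
      apply/ffunP => i; rewrite ffunE; apply/eqP; apply: NNPP => hi; apply: hn; exists i.
      exact/negP.
    by rewrite G0.
  have bj : 0 < b j by rewrite lt_def hj (Gnn h1).
  apply: le_trans (hd j (b j) _ bj) _; first by exists b.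
  rewrite (bigD1 j) //= lerDl sumr_ge0 // => i _; exact: Gnn h1 i.
rewrite -e /=.
have -> : \sum_i [ffun i => b i + c i] i = \sum_i b i + \sum_i c i.
  by rewrite -big_split; apply: eq_bigr => i _; rewrite ffunE.
by rewrite -nat1r mulrDl mul1r lerD // IH.
Qed.

Lemma list_bound (Phi : seq (exps k)) : exists B, forall a, a \in Phi ->
  forall nu, gpow G nu a != 0 -> (nu < B)%N.
Proof.
have [d [d0 hd]] := gpow_bound.
elim: Phi => [|a Phi [B hB]]; first by exists 0%N.
set x := `|(\sum_i a i) / d|.
exists (maxn B (Num.Def.archi_bound x)) => b; rewrite in_cons => /orP [/eqP -> | hb] nu hnu.
  have h1 := hd _ _ hnu.
  have : (nu%:R : Real) < (Num.Def.archi_bound x)%:R.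
    apply: le_lt_trans (Num.Theory.archi_boundP (normr_ge0 _)).
    apply: le_trans _ (ler_norm _). by rewrite ler_pdivlMr.
  by rewrite ltr_nat => h; apply: leq_trans h (leq_maxr _ _).
by apply: leq_trans (hB _ hb _ hnu) (leq_maxl _ _).
Qed.

End Main2.

Section Main3.
Variables (K : comNzRingType) (k : nat) (G : gser K k).
Hypothesis Gnn : forall a, G a != 0 -> forall i, 0 <= a i.
Hypothesis Gnat : natural_support G.
Variables (M : ordMulRVS) (m : 'I_k.+1 -> M).
Hypothesis msm : forall i, msmall (m i).
Hypothesis G0 : G [ffun=> 0] = 0.

Lemma geval_comp_nz (P : nat -> K) n : geval m (gcomp P G) n != 0 ->
  exists nu, geval m (gpow G nu) n != 0.
Proof.
have [Phi [uPhi hPhi]] := fiber_list Gnn Gnat msm n.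
have [B hB] := list_bound Gnn Gnat G0 Phi.
have e1 : geval m (gcomp P G) n = \sum_(a <- Phi) gcomp P G a.
  rewrite /geval (@fsum_eq _ _ _ _ (gcomp P G) Phi) //.
  - by move=> a [ha ea]; apply/hPhi; split => //; apply: (gcomp_supp ha).
  - move=> a /hPhi [_ ea] hA; apply/eqP; apply: NNPP => hn; apply: hA; split => //.
    by apply/negP.
have e2 : forall a, a \in Phi -> gcomp P G a = \sum_(nu <- iota 0 B) P nu * gpow G nu a.
  move=> a aP; rewrite /gcomp (@fsum_eq _ _ _ _ (fun nu => P nu * gpow G nu a) (iota 0 B)) //.
  - exact: iota_uniq.
  - move=> nu hnu; rewrite mem_iota /= add0n; apply: (hB a aP).
    by apply: contraNneq hnu => ->; rewrite mulr0.
  - by move=> nu _ hA; apply/eqP; apply: NNPP => hn; apply: hA; apply/negP.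
rewrite e1 (eq_big_seq _ e2) exchange_big /=.
have e3 : forall nu, \sum_(a <- Phi) P nu * gpow G nu a = P nu * geval m (gpow G nu) n.
  move=> nu; rewrite -mulr_sumr /geval (@fsum_eq _ _ _ _ (gpow G nu) Phi) //.
  - by move=> a [ha ea]; apply/hPhi; split => //; apply: (gpow_supp ha).
  - move=> a /hPhi [_ ea] hA; apply/eqP; apply: NNPP => hn; apply: hA; split => //.
    by apply/negP.
rewrite (eq_bigr _ (fun nu _ => e3 nu)) => /sum_nz [nu [_ h]]; exists nu.
by apply: contraNneq h => ->; rewrite mulr0.
Qed.

End Main3.

Section Prods.
Variables (K : comNzRingType) (M : ordMulRVS) (F : M -> K) (l : M).
Hypothesis hl : is_lm F l.
Hypothesis sl : msmall l.

Lemma l_le1 : mle l (mone M). Proof. by case: sl. Qed.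

Lemma Prod_le nu n : Prod F nu n -> mle n (mpowr l nu%:R).
Proof.
elim: nu n => [|nu IH] n /=; first by move=> ->; rewrite mpowr0; apply: mle_refl.
move=> [n1 [n2 [h1 [h2 ->]]]].
rewrite -nat1r mpowrD mpowr1; apply: mle_mul2; first exact: hl.2.
exact: IH.
Qed.

Lemma pow_le1 nu : mle (mpowr l nu%:R) (mone M).
Proof. by apply: mpowr_le1; [exact: l_le1 | exact: ler0n]. Qed.

Lemma pow_anti N nu : (N <= nu)%N -> mle (mpowr l nu%:R) (mpowr l N%:R).
Proof.
move=> h; rewrite -(subnKC h) natrD mpowrD -{2}(mmul1r (mpowr l N%:R)).
by apply: mle_mull; apply: pow_le1.
Qed.

Lemma Prod_le1 nu n : Prod F nu n -> mle n (mone M).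
Proof. by move=> h; apply: mle_trans (Prod_le h) (pow_le1 _). Qed.

Lemma Prod_list (c : M) : M_natural F -> forall nu, exists L : list M,
  forall n, Prod F nu n -> mlt c n -> List.In n L.
Proof.
move=> hF; case: (hF c) => LF hLF.
elim=> [|nu [L hL]]; first by exists [:: mone M] => n /= ->; left.
exists (List.flat_map (fun x => List.map (mmul x) L) LF).
move=> n /= [n1 [n2 [h1 [h2 e]]]] hc; apply/List.in_flat_map; exists n1; split.
  apply: hLF; split => //; apply: mlt_le_trans hc _; rewrite e.
  rewrite -{2}(mmul1r n1); apply: mle_mull; exact: Prod_le1 h2.
rewrite e; apply: List.in_map; apply: hL => //; apply: mlt_le_trans hc _; rewrite e.
rewrite -{2}(mmul1 n2); apply: mle_mul; apply: mle_trans (hl.2 _ h1) l_le1.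
Qed.

End Prods.

Unset Implicit Arguments. Set Strict Implicit. Set Printing Implicit Defensive.

Theorem proposition5p9 (K : comNzRingType)
    (charK0 : forall n : nat, (n%:R : K) = 0 -> n = 0%N)
    (M : ordMulRVS) (k : nat) (m : 'I_k.+1 -> M) (F : M -> K)
    (hF : is_Mgps m F) (hlm : lm_small F) (P : nat -> K) :
  is_Mgps m (Mcomp m P F) /\
  (M_natural F ->
   (forall l, is_lm F l -> coinitial (fun nu : nat => mpowr l (nu%:R))) ->
   M_natural (Mcomp m P F)).
Proof.
have [msmF [hahnF hex]] := hF.
rewrite /Mcomp; case: excluded_middle_informative => [H|nH]; last by exfalso; apply: nH.
case: (constructive_indefinite_description _ H) => G [[Gnn _] [Gnat eF]] /=.
have G0 : G [ffun=> 0] = 0.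
  have [l [[Fl hlmax] sl]] := hlm.
  apply/eqP; apply: NNPP => hne.
  have e : F (mone M) = G [ffun=> 0].
    rewrite eF /geval (@fsum_eq _ _ _ _ G [:: [ffun=> 0]]) ?big_seq1 //.
    - move=> a [ha ea]; rewrite inE; apply/eqP; apply: NNPP => hne2.
      by apply: (mono_ne1 msmF (Gnn _ ha) hne2).
    - move=> x; rewrite inE => /eqP -> hA; exfalso; apply: hA; split; first exact/negP.
      exact: mono0.
  have h1 : mle (mone M) l by apply: hlmax; rewrite e; apply/negP.
  by apply: sl.2; apply: mle_anti sl.1 h1.
split.
  split; first exact: msmF.
  split; first exact: (hahn_geval Gnn Gnat msmF (@gcomp_supp _ _ G P)).
  exists (gcomp P G); split; last split => //.
    split; first by move=> a ha i; exact: (Nat_ge0 Gnn (gcomp_supp ha) i).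
    exists (Mon G); split; first by move=> i; exact: (Mon_wo Gnn Gnat (i:=i)).
    by move=> a ha i; exact: (gcomp_supp ha i).
  move=> r i hr; case: (Mon_fin Gnn Gnat i r) => L hL.
  exists L => x [/andP [x0 xr] [a [ha ea]]]; apply: hL; split => //.
  rewrite -ea; exact: (gcomp_supp ha i).
move=> hMF hco c.
have [l [hisl sl]] := hlm.
have [N hN] := hco l hisl c.
pose Lnu nu := proj1_sig (constructive_indefinite_description _ (Prod_list hisl sl c hMF nu)).
exists (List.flat_map Lnu (iota 0 N)) => n [hn hc].
have [nu hnu] := geval_comp_nz Gnn Gnat msmF G0 hn.
have hP : Prod F nu n by rewrite eF; exact: (E_prod Gnn Gnat msmF hnu).
have nuN : (nu < N)%N.
  rewrite ltnNge; apply/negP => hle; apply: hc.2; apply: mle_anti hc.1 _.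
  apply: mle_trans (Prod_le hisl hP) _; apply: mle_trans (pow_anti sl hle) hN.
apply/List.in_flat_map; exists nu; split; first by apply/In_mem; rewrite mem_iota.
rewrite /Lnu; destruct (constructive_indefinite_description _ _) as [L hL] => /=.
exact: hL.
Qed.
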